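(* Let $\Psi:\mathbb{R}^n\to\mathbb{R}$ be convex and twice continuously differentiable, let $s:\mathbb{R}^n\to\mathbb{R}^m$ ($m\ge n$) have continuously differentiable component functions with Jacobian $J(x)\in\mathbb{R}^{m\times n}$, let $b\in\mathbb{R}^m$, $\sigma>0$, and $c(x)=\frac12\|s(x)-b\|^2-\frac{\sigma^2}{2}$, so $\nabla c(x)=J(x)^T(s(x)-b)$. Let $x^*\in\mathbb{R}^n$ and $\rho>0$ be such that for every $x$ in the open ball $\mathcal{B}_\rho(x^* )$ there exists $(p,\lambda)\in\mathbb{R}^n\times\mathbb{R}$, $\lambda>0$, solving $$\nabla\Psi(x+p)+\lambda\big(\nabla c(x)+J(x)^TJ(x)p\big)=0,\qquad c(x)+\nabla c(x)^Tp+\tfrac12 p^TJ(x)^TJ(x)p=0. \quad ( * )$$ Then for every $x\in\mathcal{B}_\rho(x^* )$, with $(p,\lambda)$ a solution of $( * )$ at $x$, there exists a constant $\phi>0$ such that for all $\beta\in[0,1]$ $$\Psi(x+\beta p)-\Psi(x)\le-\frac{\beta\lambda}{2}p^TJ(x)^TJ(x)p+\lambda\beta c(x)+\phi\beta^2\|p\|^2.$$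
   Context: $\|\cdot\|$ is the Euclidean norm. Such $x^*,\rho$ exist e.g. near a KKT point $(x^*,\lambda^* )$ with $\lambda^*>0$, $\nabla c(x^* )\ne0$ and $\nabla^2\Psi(x^* )+\lambda^*J(x^* )^TJ(x^* )$ positive definite. *)

(* Defs.v *)
From HB Require Import structures.
From mathcomp Require Import all_boot all_order all_algebra.
From mathcomp Require Import all_classical all_reals all_analysis.
Set Implicit Arguments. Unset Strict Implicit. Unset Printing Implicit Defensive.
Import Order.TTheory GRing.Theory Num.Theory.
Import numFieldNormedType.Exports.
Local Open Scope ring_scope.

Section Defs.
Variable R : realType.

Definition evec (n : nat) (j : 'I_n) : 'cV[R]_n := delta_mx j 0.

Definition dotv (n : nat) (u v : 'cV[R]_n) : R := (u^T *m v) 0 0.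
Definition enorm (n : nat) (v : 'cV[R]_n) : R := Num.sqrt (dotv v v).

Definition grad (n : nat) (f : 'cV[R]_n -> R) (x : 'cV[R]_n) : 'cV[R]_n :=
  \col_i ('D_(evec i) f x).

Definition jacobian (n m : nat) (s : 'cV[R]_n -> 'cV[R]_m) (x : 'cV[R]_n)
  : 'M[R]_(m, n) :=
  \matrix_(i, j) 'D_(evec j) (fun y => s y i 0) x.

Definition C1 (n : nat) (f : 'cV[R]_n -> R) : Prop :=
  (forall x, differentiable f x) /\
  (forall j : 'I_n, continuous (fun x => 'D_(evec j) f x)).

Definition C2 (n : nat) (f : 'cV[R]_n -> R) : Prop :=
  C1 f /\ forall i : 'I_n, C1 (fun x => grad f x i 0).

Definition convex_fun (n : nat) (f : 'cV[R]_n -> R) : Prop :=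
  forall (x y : 'cV[R]_n) (t : R), 0 <= t <= 1 ->
    f (t *: x + (1 - t) *: y) <= t * f x + (1 - t) * f y.

Definition cfun (n m : nat) (s : 'cV[R]_n -> 'cV[R]_m) (b : 'cV[R]_m) (sigma : R)
  (x : 'cV[R]_n) : R :=
  dotv (s x - b) (s x - b) / 2 - sigma ^+ 2 / 2.

Definition gradc (n m : nat) (s : 'cV[R]_n -> 'cV[R]_m) (b : 'cV[R]_m)
  (x : 'cV[R]_n) : 'cV[R]_n :=
  (jacobian s x)^T *m (s x - b).

Definition JtJ (n m : nat) (s : 'cV[R]_n -> 'cV[R]_m) (x : 'cV[R]_n) : 'M[R]_n :=
  (jacobian s x)^T *m jacobian s x.

Definition solves_star (n m : nat) (Psi : 'cV[R]_n -> R) (s : 'cV[R]_n -> 'cV[R]_m)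
  (b : 'cV[R]_m) (sigma : R) (x p : 'cV[R]_n) (lam : R) : Prop :=
  grad Psi (x + p) + lam *: (gradc s b x + JtJ s x *m p) = 0 /\
  cfun s b sigma x + dotv (gradc s b x) p + dotv p (JtJ s x *m p) / 2 = 0.

End Defs.

(* Main.v *)
Require Import Defs.
From HB Require Import structures.
From mathcomp Require Import all_boot all_order all_algebra.
From mathcomp Require Import all_classical all_reals all_analysis.
From mathcomp Require Import ring lra.
Import Order.TTheory GRing.Theory Num.Theory.
Import numFieldNormedType.Exports.
Local Open Scope ring_scope.
Local Open Scope classical_set_scope.

Lemma dot_sum (R : realType) n (u v : 'cV[R]_n) : dotv u v = \sum_k u k 0 * v k 0.
Proof. by rewrite /dotv mxE; apply: eq_bigr => k _; rewrite mxE. Qed.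

Lemma conv_dir (R : realType) n (f : 'cV[R]_n -> R) (y d : 'cV[R]_n) :
  convex_fun f -> derivable f y d -> 'D_d f y <= f (y + d) - f y.
Proof.
move=> cf /cvg_ex[l hl].
rewrite /derive (cvg_lim _ hl) //.
move: hl; set q := (fun h : R => h^-1 *: _) => hl.
have hr : q @ 0^'+ --> l.
  move=> A /hl /nbhs_ballP [_ /posnumP[e] xe_A].
  by exists e%:num => //= z xe_z /gt_eqF/negbT/xe_A; exact.
apply: (cvgr_to_le hr).
exists 1 => //= h hb h0.
rewrite /q /= /shift.
have h1 : h <= 1.
  by move: hb; rewrite /ball /= sub0r normrN gtr0_norm // => /ltW.
have := cf (y + d) y h.
rewrite (ltW h0) h1 /= => /(_ isT).
have -> : h *: (y + d) + (1 - h) *: y = h *: d + y.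
  by rewrite scalerDr scalerBl scale1r addrC addrA subrK addrC.
move=> H.
rewrite [_ *: _]mulrC ler_pdivrMr //. nra.
Qed.

Arguments conv_dir {R n f y d}.

Lemma grad_dot (R : realType) n (f : 'cV[R]_n -> R) (y v : 'cV[R]_n) :
  differentiable f y -> dotv (grad f y) v = 'D_v f y.
Proof.
move=> df; rewrite dot_sum (deriveE _ df) [in RHS](matrix_sum_delta v).
under [in RHS]eq_bigr do rewrite big_ord1.
rewrite linear_sum; apply: eq_bigr => k _.
rewrite linearZ /= mxE -deriveE // mulrC /evec.
by [].
Qed.

Theorem lemma4 (R : realType) (n m : nat) (Psi : 'cV[R]_n -> R)
  (s : 'cV[R]_n -> 'cV[R]_m) (b : 'cV[R]_m) (sigma : R)
  (xstar : 'cV[R]_n) (rho : R) :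
  (n <= m)%N ->
  convex_fun Psi -> C2 Psi ->
  (forall i : 'I_m, C1 (fun x => s x i 0)) ->
  0 < sigma -> 0 < rho ->
  (forall x, enorm (x - xstar) < rho ->
     exists p lam, 0 < lam /\ solves_star Psi s b sigma x p lam) ->
  forall x, enorm (x - xstar) < rho ->
  forall (p : 'cV[R]_n) (lam : R), 0 < lam -> solves_star Psi s b sigma x p lam ->
  exists phi : R, 0 < phi /\
    forall beta : R, 0 <= beta <= 1 ->
      Psi (x + beta *: p) - Psi x <=
        - (beta * lam / 2) * dotv p (JtJ s x *m p)
        + lam * beta * cfun s b sigma x
        + phi * beta ^+ 2 * enorm p ^+ 2.
Proof.
move=> _ cvx [[dPsi _] _] _ _ _ _ x _ p lam lam0 [E1 E2].
exists 1; split => // beta /andP[b0 b1].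
set G := grad Psi (x + p) in E1.
set g := gradc s b x in E1 E2 *.
set Hp := JtJ s x *m p in E1 E2 *.
have GE : G = - (lam *: (g + Hp)).
  by apply/eqP; rewrite -addr_eq0 E1.
have key : dotv G p = - lam * (dotv g p + dotv p Hp).
  rewrite GE !dot_sum mulrDr !mulr_sumr -big_split /=.
  by apply: eq_bigr => k _; rewrite !mxE; ring.
have cg : Psi (x + p) - Psi x <= dotv G p.
  rewrite /G grad_dot //.
  have := conv_dir cvx (@diff_derivable _ _ _ _ _ (- p) (dPsi (x + p))).
  rewrite addrK; move=> h.
  rewrite !(deriveE _ (dPsi _)) in h *; rewrite linearN /= in h; lra.
have cb := cvx (x + p) x beta.
rewrite b0 b1 /= in cb; have {}cb := cb isT.
rewrite (_ : beta *: (x + p) + (1 - beta) *: x = x + beta *: p) in cb; last first.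
  by rewrite scalerDr scalerBl scale1r addrC addrA subrK addrC.
have hint : 0 <= beta * (Psi x - Psi (x + p) + dotv G p).
  by apply: mulr_ge0 => //; lra.
rewrite key in hint.
have ce : cfun s b sigma x = - dotv g p - dotv p Hp / 2 by lra.
rewrite ce.
have e2 : 0 <= enorm p ^+ 2 by apply: sqr_ge0.
nra.
Qed.
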